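(* Let $B=F(b_1,\ldots,b_n)$ be a Ferrers board with $0\le b_1\le\cdots\le b_n$ and $b_n>0$, and let $B^-=F(b_1,\ldots,b_{n-1})$. Then for all $1\le k\le n$, $$\mathbf{rT}_k(B,p,q)=\mathbf{rT}_k(B^-,p,q)+F_{b_{n-(k-1)}}(p,q)\,\mathbf{rT}_{k-1}(B^-,p,q).$$
   Context: For $m\ge 1$, a Fibonacci tiling of height $m$ is a tiling of a column of height $m$ by tiles of height 1 and height 2 whose bottom-most tile has height 1. For such a tiling $T$, $\mathrm{one}(T)$ and $\mathrm{two}(T)$ denote the numbers of tiles of height 1 and 2, and $F_m(p,q)=\sum_T q^{\mathrm{one}(T)}p^{\mathrm{two}(T)}$ over all Fibonacci tilings of height $m$ (so $F_1=q$, $F_2=q^2$, $F_m=qF_{m-1}+pF_{m-2}$ for $m\ge 3$). There are no Fibonacci tilings of height $0$, and $F_0(p,q)=0$. A Ferrers board $F(b_1,\ldots,b_n)$ is the board whose columns, from left to right, have heights $b_1,\ldots,b_n$. A Fibonacci rook placement of $k$ tilings in $B=F(b_1,\ldots,b_n)$ consists of a choice of columns $1\le i_1<\cdots<i_k\le n$ together with, for each $s=1,\ldots,k$, a Fibonacci tiling of height $b_{i_s-(s-1)}$ placed in column $i_s$ (this is the number of cells of column $i_s$ not canceled by the tilings in columns $i_1,\ldots,i_{s-1}$, where each tiling cancels top cells of the columns to its right so that after placing $s$ tilings the untiled columns have $b_1,\ldots,b_{n-s}$ uncanceled cells from left to right). Its weight is $q^{a}p^{b}$ where $a$ (resp. $b$)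 is the total number of tiles of height 1 (resp. 2) used. $\mathbf{rT}_k(B,p,q)$ is the sum of the weights of all Fibonacci rook placements of $k$ tilings in $B$ (the empty placement, $k=0$, has weight 1; the sum is $0$ if there are none). *)

(* Defs.v *)
From mathcomp Require Import all_boot all_order all_algebra.
Set Implicit Arguments. Unset Strict Implicit. Unset Printing Implicit Defensive.
Import GRing.Theory.
Local Open Scope ring_scope.

(* A tiling of a column is a list of tile heights, listed from the bottom
   tile upwards.  [comp12 m] enumerates all tilings of a column of height m
   by tiles of height 1 and 2 (all compositions of m into parts 1 and 2). *)
Fixpoint comp12 (m : nat) : seq (seq nat) :=
  match m with
  | 0 => [:: [::]]
  | m1.+1 =>
    match m1 with
    | 0 => [:: [:: 1%N]]
    | m2.+1 => [seq 1%N :: t | t <- comp12 m1] ++ [seq 2%N :: t | t <- comp12 m2]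
    end
  end.

Definition fib_tilings (m : nat) : seq (seq nat) :=
  [seq t <- comp12 m | head 0%N t == 1%N].

Definition one (t : seq nat) : nat := count_mem 1%N t.
Definition two (t : seq nat) : nat := count_mem 2%N t.

Definition Fib (R : comRingType) (p q : R) (m : nat) : R :=
  \sum_(t <- fib_tilings m) q ^+ one t * p ^+ two t.

Fixpoint choices (T : Type) (l : seq (seq T)) : seq (seq T) :=
  match l with
  | [::] => [:: [::]]
  | c :: l' => [seq x :: y | x <- c, y <- choices l']
  end.

Definition placement_weight (R : comRingType) (p q : R) (ts : seq (seq nat)) : R :=
  q ^+ sumn [seq one t | t <- ts] * p ^+ sumn [seq two t | t <- ts].

(* The board F(b_1,...,b_n) is given by the list b = [:: b_1; ...; b_n].
   A Fibonacci rook placement of k tilings: a set S of k columns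
   (0-indexed j_0 < ... < j_(k-1), i.e. i_s = j_(s-1)+1) and, for each
   s = 0..k-1 (0-indexed), a Fibonacci tiling of height
   b_{i_(s+1) - s} = nth 0 b (j_s - s). *)
Definition rook_cols (n : nat) (S : {set 'I_n}) : seq nat :=
  sort leq [seq val i | i <- enum S].

Definition rT (R : comRingType) (p q : R) (b : seq nat) (k : nat) : R :=
  \sum_(S : {set 'I_(size b)} | #|S| == k)
    \sum_(ts <- choices [seq fib_tilings (nth 0%N b (js.1 - js.2))
                        | js <- zip (rook_cols S) (iota 0 k)])
      placement_weight p q ts.

(* Main.v *)
Require Import Defs.
From mathcomp Require Import all_boot all_order all_algebra.
From mathcomp Require Import ring.
Import GRing.Theory.
Local Open Scope ring_scope.

Section S.
Variables (R : comRingType) (p q : R).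
Definition wt (t : seq nat) : R := q ^+ Defs.one t * p ^+ Defs.two t.

Lemma choices_sum (L : seq (seq (seq nat))) :
  \sum_(ts <- choices L) placement_weight p q ts = \prod_(T <- L) \sum_(t <- T) wt t.
Proof.
elim: L => [|c L IH] /=.
  by rewrite big_nil big_seq1 /placement_weight /= !expr0 mulr1.
rewrite big_allpairs_dep big_cons mulr_suml; apply: eq_bigr => x _.
rewrite -IH mulr_sumr; apply: eq_bigr => y _.
rewrite /placement_weight /wt /= !exprD; ring.
Qed.

Lemma enumE m (S : {set 'I_m}) : enum S = [seq i <- enum 'I_m | i \in S].
Proof. by rewrite enumT /enum_mem. Qed.

Lemma rook_colsE m (S : {set 'I_m}) : rook_cols S = [seq val i | i <- enum S].
Proof.
rewrite /rook_cols sorted_sort //; first exact: leq_trans.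
apply: (@subseq_sorted _ _ leq_trans _ (iota 0 m)).
  by rewrite -val_enum_ord map_subseq // enumE filter_subseq.
by have := iota_ltn_sorted 0 m; rewrite ltn_sorted_uniq_leq => /andP[].
Qed.

Definition G (b : seq nat) (c : seq nat) : R :=
  \prod_(js <- zip c (iota 0 (size c))) Fib p q (nth 0%N b (js.1 - js.2)).

Lemma rT_alt b k n : size b = n ->
  rT p q b k = \sum_(S : {set 'I_n} | #|S| == k) G b (rook_cols S).
Proof.
move=> <-; apply: eq_bigr => S /eqP HS.
rewrite choices_sum big_map /G rook_colsE size_map -cardE HS.
by apply: eq_bigr.
Qed.

Section Split.
Variable n : nat.
Local Notation L := (lift (@ord_max n)).

Lemma L_val (i : 'I_n) : val (L i) = val i.
Proof. by rewrite /= /bump leqNgt ltn_ord. Qed.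

Lemma L_inj : injective L.
Proof. exact: lift_inj. Qed.

Lemma max_notin (S : {set 'I_n}) : (ord_max \notin L @: S).
Proof.
apply/imsetP => -[i _] /(congr1 val); rewrite L_val /= => E.
by move: (ltn_ord i); rewrite -E ltnn.
Qed.

Lemma widenL (i : 'I_n) : widen_ord (leqnSn n) i = L i.
Proof. by apply: val_inj; rewrite L_val. Qed.

Lemma rc0 (S : {set 'I_n}) : rook_cols (L @: S) = rook_cols S.
Proof.
rewrite !rook_colsE !enumE enum_ordSr filter_rcons (negbTE (max_notin S)).
rewrite filter_map -!map_comp; congr map; apply: eq_filter => i /=.
by rewrite widenL mem_imset //; exact: L_inj.
Qed.

Lemma rc1 (S : {set 'I_n}) : rook_cols (ord_max |: L @: S) = rcons (rook_cols S) n.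
Proof.
rewrite !rook_colsE !enumE enum_ordSr filter_rcons setU11 map_rcons.
rewrite filter_map -!map_comp; congr rcons; congr map; apply: eq_filter => i /=.
rewrite widenL !inE mem_imset; last exact: L_inj.
by rewrite eq_sym (negbTE (neq_lift _ _)).
Qed.

Lemma preL (S : {set 'I_n}) : L @^-1: (L @: S) = S.
Proof. by apply/setP => i; rewrite inE mem_imset //; exact: L_inj. Qed.

Lemma preL1 (S : {set 'I_n}) : L @^-1: (ord_max |: L @: S) = S.
Proof.
apply/setP => i; rewrite !inE mem_imset; last exact: L_inj.
by rewrite eq_sym (negbTE (neq_lift _ _)).
Qed.

Lemma imL (S : {set 'I_n.+1}) : ord_max \notin S -> L @: (L @^-1: S) = S.
Proof.
move=> H; apply/setP => i; case: (unliftP ord_max i) => [j ->|->].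
  by rewrite mem_imset ?inE //; exact: L_inj.
by rewrite (negbTE H) (negbTE (max_notin _)).
Qed.

Lemma imL1 (S : {set 'I_n.+1}) : ord_max \in S -> ord_max |: L @: (L @^-1: S) = S.
Proof.
move=> H; apply/setP => i; rewrite inE; case: (unliftP ord_max i) => [j ->|->].
  by rewrite in_set1 eq_sym (negbTE (neq_lift _ _)) mem_imset ?inE //; exact: L_inj.
by rewrite in_set1 eqxx H.
Qed.

Lemma G_rcons b c : G b (rcons c n) = G b c * Fib p q (nth 0%N b (n - size c)).
Proof.
rewrite /G size_rcons -addn1 iotaD add0n /= cats1 zip_rcons ?size_iota //.
by rewrite -cats1 big_cat big_seq1.
Qed.

Lemma split_sum b k : (0 < k)%N ->
  \sum_(S : {set 'I_n.+1} | #|S| == k) G b (rook_cols S) =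
  \sum_(S : {set 'I_n} | #|S| == k) G b (rook_cols S)
  + Fib p q (nth 0%N b (n.+1 - k)) * \sum_(S : {set 'I_n} | #|S| == k.-1) G b (rook_cols S).
Proof.
move=> k0.
rewrite (bigID (fun S : {set 'I_n.+1} => ord_max \in S)) /= addrC; congr (_ + _).
  rewrite (reindex_onto (fun S' : {set 'I_n} => L @: S') (fun S : {set 'I_n.+1} => L @^-1: S)); last first.
    by move=> S /andP[_ H]; exact: imL.
  apply: eq_big => S.
    by rewrite preL eqxx max_notin card_imset ?andbT //; exact: L_inj.
  by rewrite rc0.
rewrite (reindex_onto (fun S' : {set 'I_n} => ord_max |: L @: S') (fun S : {set 'I_n.+1} => L @^-1: S)); last first.
  by move=> S /andP[_ H]; exact: imL1.
rewrite mulr_sumr; apply: eq_big => S.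
  rewrite preL1 eqxx setU11 !andbT cardsU1 max_notin card_imset; last exact: L_inj.
  by case: k k0.
move=> /andP[/andP[/eqP HS _] _].
rewrite cardsU1 max_notin card_imset in HS; last exact: L_inj.
rewrite rc1 G_rcons mulrC rook_colsE size_map -cardE -HS.
by rewrite add1n subSS.
Qed.
End Split.

Lemma G_take n b (S : {set 'I_n}) : G b (rook_cols S) = G (take n b) (rook_cols S).
Proof.
rewrite /G; apply: eq_big_seq => js Hjs; congr Fib; rewrite nth_take //.
have : js.1 \in rook_cols S.
  by rewrite -[rook_cols S](@unzip1_zip _ _ _ (iota 0 (size (rook_cols S))))
     ?size_iota // (map_f fst Hjs).
rewrite rook_colsE => /mapP[i _ ->].
exact: leq_ltn_trans (leq_subr _ _) (ltn_ord i).
Qed.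
End S.

Theorem theorem3 (R : comRingType) (p q : R) (b : seq nat) (k : nat) :
  sorted leq b -> (0 < last 0 b)%N -> (1 <= k <= size b)%N ->
  rT p q b k =
    rT p q (take (size b).-1 b) k
    + Fib p q (nth 0%N b (size b - k)) * rT p q (take (size b).-1 b) k.-1.
Proof.
move=> _ _ /andP[k1 kb].
have [n Hn] : exists n, size b = n.+1 by case: (size b) kb; [case: k k1|move=> m; exists m].
have Ht : size (take n b) = n by rewrite size_take Hn ltnSn.
rewrite Hn /= (@rT_alt R p q b k _ Hn) (@rT_alt R p q _ k _ Ht) (@rT_alt R p q _ k.-1 _ Ht).
rewrite split_sum //; congr (_ + _ * _); apply: eq_bigr => S _; exact: G_take.
Qed.
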